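(* Let $X\in\mathcal{Y}$ and $T\in L(X)$. Suppose there exists $M\in L(X)$ with $[T,[T,M]]=0$ such that for every cyclic vector $u$ of $T$ and every $v\in X$ there exist $B,C\in\mathcal{C}(T)$ with $C[T,M]\neq 0$ and $Cv=Bu$. Then $T$ is not weakly supercyclic.
   Context: Scalars are $\mathbb{K}\in\{\mathbb{R},\mathbb{C}\}$. $L(X)$ denotes bounded linear operators on the Banach space $X$; $[T,S]=TS-ST$; $\mathcal{C}(T)=\{S\in L(X):[T,S]=0\}$. A vector $u$ is cyclic for $T$ if the span of $\{T^nu:n\in\mathbb{Z}_+\}$ is dense. $T$ is weakly supercyclic if for some $x$ the set $\{zT^nx:z\in\mathbb{K},n\in\mathbb{Z}_+\}$ is weakly dense in $X$. $\mathcal{Y}$ is the class of Banach spaces $X$ such that for every sequence $(x_n)_{n\in\mathbb{Z}_+}$ in $X$ with $n=O(\|x_n\|)$ as $n\to\infty$, the set $\{x_n:n\in\mathbb{Z}_+\}$ is weakly closed. *)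

(* Defs.v *)
From Stdlib Require Import Reals List.
Open Scope R_scope.

Record Scalars := {
  sK :> Type;
  sadd : sK -> sK -> sK;
  smul : sK -> sK -> sK;
  sopp : sK -> sK;
  s0 : sK;
  s1 : sK;
  sabs : sK -> R }.

Definition RScalars : Scalars :=
  {| sK := R; sadd := Rplus; smul := Rmult; sopp := Ropp; s0 := 0; s1 := 1;
     sabs := Rabs |}.

(* Complex numbers as pairs (re, im). *)
Definition CC := (R * R)%type.
Definition Cadd (z w : CC) : CC := (fst z + fst w, snd z + snd w).
Definition Cmul (z w : CC) : CC :=
  (fst z * fst w - snd z * snd w, fst z * snd w + snd z * fst w).
Definition Copp (z : CC) : CC := (- fst z, - snd z).
Definition Cabs (z : CC) : R := sqrt (fst z * fst z + snd z * snd z).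

Definition CScalars : Scalars :=
  {| sK := CC; sadd := Cadd; smul := Cmul; sopp := Copp; s0 := (0, 0);
     s1 := (1, 0); sabs := Cabs |}.

Definition Kof (b : bool) : Scalars := if b then CScalars else RScalars.

Record Banach (K : Scalars) := {
  bcar :> Type;
  bzero : bcar;
  badd : bcar -> bcar -> bcar;
  bopp : bcar -> bcar;
  bscal : sK K -> bcar -> bcar;
  bnorm : bcar -> R;
  badd_assoc : forall x y z, badd x (badd y z) = badd (badd x y) z;
  badd_comm : forall x y, badd x y = badd y x;
  badd_0 : forall x, badd x bzero = x;
  badd_opp : forall x, badd x (bopp x) = bzero;
  bscal_1 : forall x, bscal (s1 K) x = x;
  bscal_mul : forall a c x, bscal (smul K a c) x = bscal a (bscal c x);
  bscal_addK : forall a c x, bscal (sadd K a c) x = badd (bscal a x) (bscal c x);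
  bscal_addV : forall a x y, bscal a (badd x y) = badd (bscal a x) (bscal a y);
  bnorm_eq0 : forall x, bnorm x = 0 -> x = bzero;
  bnorm_scal : forall a x, bnorm (bscal a x) = sabs K a * bnorm x;
  bnorm_tri : forall x y, bnorm (badd x y) <= bnorm x + bnorm y;
  bcomplete : forall u : nat -> bcar,
    (forall eps, eps > 0 -> exists N, forall m n, (m >= N)%nat -> (n >= N)%nat ->
        bnorm (badd (u m) (bopp (u n))) < eps) ->
    exists l, forall eps, eps > 0 -> exists N, forall n, (n >= N)%nat ->
        bnorm (badd (u n) (bopp l)) < eps }.

Arguments bzero {K} _.
Arguments badd {K} _ _ _.
Arguments bopp {K} _ _.
Arguments bscal {K} _ _ _.
Arguments bnorm {K} _ _.

Definition bsub {K} {X : Banach K} (x y : X) : X := badd X x (bopp X y).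

Definition is_linear_op {K} {X : Banach K} (T : X -> X) : Prop :=
  (forall x y, T (badd X x y) = badd X (T x) (T y)) /\
  (forall a x, T (bscal X a x) = bscal X a (T x)).

Definition bounded_op {K} {X : Banach K} (T : X -> X) : Prop :=
  is_linear_op T /\ exists c, forall x, bnorm X (T x) <= c * bnorm X x.

Definition commutator {K} {X : Banach K} (T S : X -> X) : X -> X :=
  fun x => bsub (T (S x)) (S (T x)).

Definition is_zero_op {K} {X : Banach K} (T : X -> X) : Prop :=
  forall x, T x = bzero X.

Definition in_commutant {K} {X : Banach K} (T S : X -> X) : Prop :=
  bounded_op S /\ is_zero_op (commutator T S).

Definition dual_fun {K} {X : Banach K} (f : X -> sK K) : Prop :=
  (forall x y, f (badd X x y) = sadd K (f x) (f y)) /\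
  (forall a x, f (bscal X a x) = smul K a (f x)) /\
  (exists c, forall x, sabs K (f x) <= c * bnorm X x).

Definition weak_adherent {K} {X : Banach K} (A : X -> Prop) (x : X) : Prop :=
  forall (fs : list (X -> sK K)) (eps : R),
    Forall dual_fun fs -> eps > 0 ->
    exists a, A a /\
      Forall (fun f => sabs K (sadd K (f a) (sopp K (f x))) < eps) fs.

Definition weakly_closed {K} {X : Banach K} (A : X -> Prop) : Prop :=
  forall x, weak_adherent A x -> A x.

Definition weakly_dense {K} {X : Banach K} (A : X -> Prop) : Prop :=
  forall x, weak_adherent A x.

Fixpoint orbit_comb {K} {X : Banach K} (T : X -> X) (u : X) (c : nat -> sK K)
    (n : nat) : X :=
  match n with
  | O => bzero X
  | S m => badd X (orbit_comb T u c m) (bscal X (c m) (Nat.iter m T u))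
  end.

Definition cyclic_vector {K} {X : Banach K} (T : X -> X) (u : X) : Prop :=
  forall y eps, eps > 0 ->
    exists (n : nat) (c : nat -> sK K), bnorm X (bsub y (orbit_comb T u c n)) < eps.

Definition weakly_supercyclic {K} {X : Banach K} (T : X -> X) : Prop :=
  exists x, weakly_dense (fun y => exists (z : sK K) (n : nat), y = bscal X z (Nat.iter n T x)).

Definition in_class_Y {K} (X : Banach K) : Prop :=
  forall x : nat -> X,
    (exists (C : R) (N : nat), forall n, (n >= N)%nat -> INR n <= C * bnorm X (x n)) ->
    weakly_closed (fun y => exists n, y = x n).

(* Main.v *)
Require Import Defs.
From Stdlib Require Import Reals List Ring Field Lra Psatz Classical ClassicalEpsilon FunctionalExtensionality PropExtensionality.
Open Scope R_scope.

Lemma Kring (b:bool) : ring_theory (s0 (Kof b)) (s1 (Kof b)) (sadd (Kof b)) (smul (Kof b)) (fun x y => sadd (Kof b) x (sopp (Kof b) y)) (sopp (Kof b)) (@eq (Kof b)).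
Proof. destruct b; constructor; simpl; intros.
all: try (destruct x); try (destruct y); try (destruct z); unfold Cadd, Cmul, Copp; simpl.
all: try (f_equal; ring).
all: try ring.
Qed.

Definition Kinv (b : bool) : sK (Kof b) -> sK (Kof b) :=
  match b as b0 return sK (Kof b0) -> sK (Kof b0) with
  | true => fun z : CC => (fst z / (fst z * fst z + snd z * snd z), - snd z / (fst z * fst z + snd z * snd z))
  | false => fun r : R => / r
  end.

Definition iota (b : bool) (r : R) : sK (Kof b) :=
  match b as b0 return sK (Kof b0) with
  | true => (r, 0)
  | false => r
  end.

Definition Re (b : bool) : sK (Kof b) -> R :=
  match b as b0 return sK (Kof b0) -> R with
  | true => fun z : CC => fst z
  | false => fun r : R => r
  end.

Lemma C_nz (z : CC) : z <> (0,0) -> fst z * fst z + snd z * snd z <> 0.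
Proof. destruct z as [u v]; simpl; intros H E. apply H.
  assert (u = 0) by nra. assert (v = 0) by nra. subst; reflexivity. Qed.

Lemma Kfield (b:bool) : field_theory (s0 (Kof b)) (s1 (Kof b)) (sadd (Kof b)) (smul (Kof b)) (fun x y => sadd (Kof b) x (sopp (Kof b) y)) (sopp (Kof b)) (fun x y => smul (Kof b) x (Kinv b y)) (Kinv b) (@eq (Kof b)).
Proof. constructor.
- apply Kring.
- destruct b; simpl; [intro H; inversion H; lra | lra].
- reflexivity.
- destruct b; simpl; intros p Hp.
  + pose proof (C_nz p Hp). destruct p as [u v]; simpl in *. unfold Cmul; simpl.
    f_equal; field; auto.
  + field; auto.
Qed.

Section Sc.
Variable b : bool.
Add Field KF : (Kfield b).
Notation K := (Kof b).

Lemma test (x y : K) : y <> s0 K -> smul K (smul K x y) (Kinv b y) = x.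
Proof. intros. field. auto. Qed.
End Sc.
Section Abs.
Variable b : bool.
Notation K := (Kof b).

Lemma sabs_nonneg (a : K) : 0 <= sabs K a.
Proof. destruct b; simpl. - apply sqrt_pos. - apply Rabs_pos. Qed.

Lemma sabs_0 : sabs K (s0 K) = 0.
Proof. destruct b; simpl. - unfold Cabs; simpl. replace (0*0+0*0) with 0 by ring. apply sqrt_0. - apply Rabs_R0. Qed.

Lemma sabs_1 : sabs K (s1 K) = 1.
Proof. destruct b; simpl. - unfold Cabs; simpl. replace (1*1+0*0) with 1 by ring. apply sqrt_1. - apply Rabs_R1. Qed.

Lemma sabs_eq0 (a : K) : sabs K a = 0 -> a = s0 K.
Proof. destruct b; simpl.
- destruct a as [u v]; unfold Cabs; simpl; intro H. apply sqrt_eq_0 in H; [|nra].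
  assert (u = 0) by nra. assert (v = 0) by nra. subst; reflexivity.
- intro H. destruct (Req_dec a 0); auto. exfalso. apply Rabs_no_R0 in H0. auto. Qed.

Lemma sabs_pos (a : K) : a <> s0 K -> 0 < sabs K a.
Proof. intro H. pose proof (sabs_nonneg a). destruct (Req_dec (sabs K a) 0) as [E|E]; [apply sabs_eq0 in E; contradiction | lra]. Qed.

Lemma sabs_mul (a c : K) : sabs K (smul K a c) = sabs K a * sabs K c.
Proof. destruct b; simpl.
- destruct a as [u v]; destruct c as [p q]; unfold Cabs, Cmul; simpl.
  rewrite <- sqrt_mult by nra. f_equal. ring.
- apply Rabs_mult. Qed.

Lemma sabs_opp (a : K) : sabs K (sopp K a) = sabs K a.
Proof. destruct b; simpl.
- destruct a as [u v]; unfold Cabs, Copp; simpl. f_equal; ring.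
- apply Rabs_Ropp. Qed.

Lemma sabs_tri (a c : K) : sabs K (sadd K a c) <= sabs K a + sabs K c.
Proof. destruct b; simpl.
- destruct a as [u v]; destruct c as [p q]; unfold Cabs, Cadd; simpl.
  assert (H1 := sqrt_pos (u*u+v*v)). assert (H2 := sqrt_pos (p*p+q*q)).
  apply Rsqr_incr_0_var; [| nra]. unfold Rsqr.
  pose proof (Rle_0_sqr (u+p)); pose proof (Rle_0_sqr (v+q)); pose proof (Rle_0_sqr u);
  pose proof (Rle_0_sqr v); pose proof (Rle_0_sqr p); pose proof (Rle_0_sqr q); unfold Rsqr in *.
  rewrite sqrt_sqrt by nra.
  replace ((sqrt (u*u+v*v) + sqrt (p*p+q*q)) * (sqrt (u*u+v*v) + sqrt (p*p+q*q)))
   with (sqrt (u*u+v*v) * sqrt (u*u+v*v) + sqrt (p*p+q*q) * sqrt (p*p+q*q) + 2 * (sqrt (u*u+v*v) * sqrt (p*p+q*q))) by ring.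
  rewrite !sqrt_sqrt by nra. rewrite <- sqrt_mult by nra.
  assert (u*p+v*q <= sqrt ((u*u+v*v)*(p*p+q*q))).
  { destruct (Rle_dec (u*p+v*q) 0). - pose proof (sqrt_pos ((u*u+v*v)*(p*p+q*q))); lra.
    - apply Rsqr_incr_0_var; [|apply sqrt_pos]. unfold Rsqr. rewrite sqrt_sqrt by nra.
      pose proof (Rle_0_sqr (u*q - v*p)); unfold Rsqr in *. nra. }
  nra.
- apply Rabs_triang. Qed.

Lemma iota_add r s : iota b (r + s) = sadd K (iota b r) (iota b s).
Proof. destruct b; simpl; auto. unfold Cadd; simpl. f_equal; ring. Qed.
Lemma iota_mul r s : iota b (r * s) = smul K (iota b r) (iota b s).
Proof. destruct b; simpl; auto. unfold Cmul; simpl. f_equal; ring. Qed.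
Lemma iota_opp r : iota b (- r) = sopp K (iota b r).
Proof. destruct b; simpl; auto. unfold Copp; simpl. f_equal; ring. Qed.
Lemma iota_0 : iota b 0 = s0 K.
Proof. destruct b; reflexivity. Qed.
Lemma iota_1 : iota b 1 = s1 K.
Proof. destruct b; reflexivity. Qed.
Lemma sabs_iota r : sabs K (iota b r) = Rabs r.
Proof. destruct b; simpl; auto. unfold Cabs; simpl. replace (r*r+0*0) with (Rsqr r) by (unfold Rsqr; ring).
  apply sqrt_Rsqr_abs. Qed.
Lemma iota_inj r s : iota b r = iota b s -> r = s.
Proof. destruct b; simpl; auto. intro H; inversion H; auto. Qed.
Lemma Re_add a c : Re b (sadd K a c) = Re b a + Re b c.
Proof. destruct b; simpl; auto. Qed.
Lemma Re_iota_mul r a : Re b (smul K (iota b r) a) = r * Re b a.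
Proof. destruct b; simpl; auto. destruct a; simpl. ring. Qed.
Lemma Re_iota r : Re b (iota b r) = r.
Proof. destruct b; reflexivity. Qed.
Lemma Re_le a : Re b a <= sabs K a.
Proof. destruct b; simpl.
- destruct a as [u v]; unfold Cabs; simpl.
  destruct (Rle_dec u 0). + pose proof (sqrt_pos (u*u+v*v)); lra.
  + apply Rsqr_incr_0_var; [|apply sqrt_pos]. unfold Rsqr. rewrite sqrt_sqrt by nra. nra.
- apply Rle_abs. Qed.
End Abs.
Section Vec.
Variable b : bool.
Notation K := (Kof b).
Variable X : Banach K.
Add Field KF3 : (Kfield b).
Notation "x +v y" := (badd X x y) (at level 50, left associativity).
Notation "a *v x" := (bscal X a x) (at level 40).
Notation "0v" := (bzero X).

Lemma add0l (x : X) : 0v +v x = x.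
Proof. rewrite badd_comm. apply badd_0. Qed.

Lemma add_cancel_l (x y z : X) : x +v y = x +v z -> y = z.
Proof. intro H. rewrite <- (add0l y), <- (add0l z).
  rewrite <- (badd_opp _ X x). rewrite (badd_comm _ X x (bopp X x)).
  rewrite <- !badd_assoc. rewrite H. reflexivity. Qed.

Lemma scal0 (x : X) : s0 K *v x = 0v.
Proof. apply (add_cancel_l (s0 K *v x)). rewrite badd_0.
  rewrite <- bscal_addK. f_equal. ring. Qed.

Lemma scalz (a : K) : a *v 0v = 0v.
Proof. apply (add_cancel_l (a *v 0v)). rewrite badd_0.
  rewrite <- bscal_addV. rewrite badd_0. reflexivity. Qed.

Lemma opp_scal (x : X) : bopp X x = sopp K (s1 K) *v x.
Proof. apply (add_cancel_l x). rewrite badd_opp.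
  rewrite <- (bscal_1 _ X x) at 1. rewrite <- bscal_addK.
  replace (sadd K (s1 K) (sopp K (s1 K))) with (s0 K) by ring.
  symmetry; apply scal0. Qed.

Lemma sub_scal (x y : X) : bsub x y = x +v (sopp K (s1 K) *v y).
Proof. unfold bsub. rewrite opp_scal. reflexivity. Qed.

Lemma scal_scal (a c : K) (x : X) : a *v (c *v x) = smul K a c *v x.
Proof. rewrite bscal_mul. reflexivity. Qed.

Lemma sub_eq0 (x y : X) : bsub x y = 0v -> x = y.
Proof. unfold bsub. intro H. apply (add_cancel_l (bopp X y)).
  rewrite badd_comm, H, badd_comm, badd_opp. reflexivity. Qed.

Lemma eq_sub0 (x : X) : bsub x x = 0v.
Proof. apply badd_opp. Qed.

Lemma add_swap (a c d e : X) : (a +v c) +v (d +v e) = (a +v d) +v (c +v e).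
Proof. rewrite !badd_assoc. f_equal. rewrite <- !badd_assoc. f_equal. apply badd_comm. Qed.

Lemma norm0 : bnorm X 0v = 0.
Proof. rewrite <- (scal0 0v). rewrite bnorm_scal, sabs_0. ring. Qed.

Lemma norm_opp (x : X) : bnorm X (bopp X x) = bnorm X x.
Proof. rewrite opp_scal, bnorm_scal, sabs_opp, sabs_1. ring. Qed.

Lemma norm_nonneg (x : X) : 0 <= bnorm X x.
Proof. pose proof (bnorm_tri _ X x (bopp X x)). rewrite badd_opp, norm0, norm_opp in H. lra. Qed.

Lemma norm_pos (x : X) : x <> 0v -> 0 < bnorm X x.
Proof. intro H. pose proof (norm_nonneg x). destruct (Req_dec (bnorm X x) 0) as [E|E].
  - apply bnorm_eq0 in E. contradiction. - lra. Qed.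

Lemma norm_sub_sym (x y : X) : bnorm X (bsub x y) = bnorm X (bsub y x).
Proof. rewrite <- norm_opp. f_equal. rewrite !sub_scal, opp_scal, bscal_addV, scal_scal.
  rewrite badd_comm. f_equal. rewrite <- (bscal_1 _ X y) at 2. f_equal. ring. Qed.
End Vec.
Section Zorn.
Variable U : Type.
Definition incl (s t : U -> Prop) := forall u, s u -> t u.
Variable P : (U -> Prop) -> Prop.
Variable base : U -> Prop.
Hypothesis Pbase : P base.
Definition chainF (C : (U -> Prop) -> Prop) := forall s t, C s -> C t -> incl s t \/ incl t s.
Definition unionF (C : (U -> Prop) -> Prop) : U -> Prop := fun u => exists s, C s /\ s u.
Hypothesis Pchain : forall C, (forall s, C s -> P s) -> chainF C -> (exists s, C s) -> P (unionF C).

Lemma set_ext (s t : U -> Prop) : incl s t -> incl t s -> s = t.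
Proof. intros H1 H2. apply functional_extensionality; intro u. apply propositional_extensionality; split; auto. Qed.

Section NoMax.
Hypothesis nomax : forall m, P m -> exists s, P s /\ incl m s /\ ~ incl s m.

Lemma next_ex (m : U -> Prop) : exists s, P m -> P s /\ incl m s /\ ~ incl s m.
Proof. destruct (classic (P m)) as [H|H].
  - destruct (nomax m H) as [s Hs]. exists s; auto.
  - exists m. intro; contradiction. Qed.

Definition next (m : U -> Prop) : U -> Prop := proj1_sig (constructive_indefinite_description _ (next_ex m)).
Lemma next_spec m : P m -> P (next m) /\ incl m (next m) /\ ~ incl (next m) m.
Proof. unfold next. destruct (constructive_indefinite_description _ (next_ex m)) as [s Hs]. simpl. auto. Qed.

Inductive tw : (U -> Prop) -> Prop :=
| tw_base : tw base
| tw_next : forall s, tw s -> tw (next s)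
| tw_sup : forall C, (forall s, C s -> tw s) -> chainF C -> (exists s, C s) -> tw (unionF C).

Lemma tw_P s : tw s -> P s.
Proof. induction 1. - auto. - apply next_spec; auto. - apply Pchain; auto. Qed.

Lemma tw_base_incl s : tw s -> incl base s.
Proof. induction 1.
  - intros u h; auto.
  - intros u h. apply (next_spec s (tw_P s H)). auto.
  - intros u h. destruct H2 as [s Hs]. exists s. split; auto. apply H0; auto. Qed.

Definition extreme (c : U -> Prop) := forall t, tw t -> incl t c -> t = c \/ incl (next t) c.

Lemma lemma1 c : tw c -> extreme c -> forall t, tw t -> incl t c \/ incl (next c) t.
Proof. intros Hc Ex t Ht. induction Ht.
  - left. apply tw_base_incl; auto.
  - destruct IHHt as [H|H].
    + destruct (Ex s Ht H) as [E|E].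
      * right. subst. intros u h; auto.
      * left; auto.
    + right. intros u h. apply (next_spec s (tw_P s Ht)). auto.
  - destruct (classic (exists s, C s /\ incl (next c) s)) as [[s [Cs Hs]]|N].
    + right. intros u h. exists s; split; auto.
    + left. intros u [s [Cs Hs]]. destruct (H0 s Cs) as [E|E]; auto.
      exfalso; apply N; exists s; auto. Qed.

Lemma all_extreme c : tw c -> extreme c.
Proof. induction 1.
  - intros t Ht Hi. left. apply set_ext; auto. apply tw_base_incl; auto.
  - intros t Ht Hi. destruct (lemma1 s H IHtw t Ht) as [E|E].
    + destruct (IHtw t Ht E) as [E2|E2].
      * subst. right. intros u h; auto.
      * right. intros u h. apply (next_spec s (tw_P s H)). auto.
    + left. apply set_ext; auto.
  - intros t Ht Hi.
    destruct (classic (exists c, C c /\ incl t c /\ ~ incl c t)) as [[c [Cc [H3 H4]]]|N].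
    + destruct (H0 c Cc t Ht H3) as [E|E].
      * subst. exfalso. apply H4. intros u h; auto.
      * right. intros u h. exists c; split; auto.
    + left. apply set_ext; auto. intros u [c [Cc Hcu]].
      destruct (lemma1 c (H c Cc) (H0 c Cc) t Ht) as [E|E].
      * destruct (classic (incl c t)) as [F|F]; auto.
        exfalso. apply N. exists c; auto.
      * apply E. apply (next_spec c (tw_P c (H c Cc))). auto. Qed.

Lemma tw_chain : chainF tw.
Proof. intros s t Hs Ht. destruct (lemma1 s Hs (all_extreme s Hs) t Ht) as [E|E]; auto.
  left. intros u h. apply E. apply (next_spec s (tw_P s Hs)). auto. Qed.

Lemma nomax_false : False.
Proof. assert (Hu : tw (unionF tw)). { apply tw_sup; auto. apply tw_chain. exists base; constructor. }
  assert (Hn : tw (next (unionF tw))) by (constructor; auto).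
  destruct (next_spec _ (tw_P _ Hu)) as [_ [_ N]]. apply N.
  intros u h. exists (next (unionF tw)). split; auto. Qed.
End NoMax.

Lemma zorn : exists m, P m /\ forall s, P s -> incl m s -> incl s m.
Proof. apply NNPP. intro N. apply nomax_false. intros m Pm. apply NNPP. intro N2. apply N.
  exists m. split; auto. intros s Ps Hi. apply NNPP. intro N3. apply N2. exists s; auto. Qed.
End Zorn.
Section HB.
Variable b : bool.
Notation K := (Kof b).
Variable X : Banach K.
Add Field KF5 : (Kfield b).
Notation "x +v y" := (badd X x y) (at level 50, left associativity).
Notation "a *v x" := (bscal X a x) (at level 40).
Notation "0v" := (bzero X).
Notation io := (iota b).

Lemma R1 (x : X) : io 1 *v x = x.
Proof. rewrite iota_1. apply bscal_1. Qed.
Lemma R2 a c (x : X) : io a *v x +v io c *v x = io (a + c) *v x.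
Proof. rewrite iota_add, bscal_addK. reflexivity. Qed.
Lemma R3 a c (x : X) : io a *v (io c *v x) = io (a * c) *v x.
Proof. rewrite iota_mul, bscal_mul. reflexivity. Qed.
Lemma R4 (x : X) : io 0 *v x = 0v.
Proof. rewrite iota_0. apply scal0. Qed.
Lemma R6 (x : X) : bopp X x = io (-1) *v x.
Proof. replace (-1) with (- (1)) by ring. rewrite iota_opp, iota_1. apply opp_scal. Qed.
Lemma R7 (x : X) : x +v io (-1) *v x = 0v.
Proof. rewrite <- R6. apply badd_opp. Qed.

Variable k : R.
Hypothesis kpos : 0 < k.
Definition pp (x : X) := k * bnorm X x.
Lemma pp_tri x y : pp (x +v y) <= pp x + pp y.
Proof. unfold pp. pose proof (bnorm_tri _ X x y). nra. Qed.
Lemma pp_scal r x : pp (io r *v x) = Rabs r * pp x.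
Proof. unfold pp. rewrite bnorm_scal, sabs_iota. ring. Qed.

Definition good (G : X * R -> Prop) :=
 (forall x a a', G (x,a) -> G (x,a') -> a = a') /\
 (forall x a y c, G (x,a) -> G (y,c) -> G (x +v y, a + c)) /\
 (forall r x a, G (x,a) -> G (io r *v x, r * a)) /\
 (forall x a, G (x,a) -> a <= pp x).

Lemma extend (G : X * R -> Prop) (z : X) : good G -> G (0v, 0) -> ~ (exists a, G (z, a)) ->
  exists G', good G' /\ incl _ G G' /\ exists a, G' (z, a).
Proof. intros [Gf [Ga [Gs Gd]]] G0 Nz.
  set (E := fun r => exists w c, G (w,c) /\ r = c - pp (w +v io (-1) *v z)).
  assert (Key : forall w c w' c', G (w,c) -> G (w',c') -> c - pp (w +v io (-1) *v z) <= pp (w' +v z) - c').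
  { intros w c w' c' H1 H2. pose proof (Ga _ _ _ _ H1 H2) as H3. apply Gd in H3.
    pose proof (pp_tri (w +v io (-1) *v z) (w' +v z)).
    rewrite add_swap in H. rewrite (badd_comm _ X (io (-1) *v z) z), R7, badd_0 in H. lra. }
  assert (Eb : bound E). { exists (pp (0v +v z) - 0). intros r [w [c [H1 ->]]]. apply Key; auto. }
  assert (Ene : exists r, E r). { exists (0 - pp (0v +v io (-1) *v z)). exists 0v, 0. auto. }
  destruct (completeness E Eb Ene) as [m [Hm1 Hm2]].
  assert (Lo : forall w c, G (w,c) -> c - pp (w +v io (-1) *v z) <= m).
  { intros w c H. apply Hm1. exists w, c; auto. }
  assert (Hi : forall w c, G (w,c) -> m <= pp (w +v z) - c).
  { intros w c H. apply Hm2. intros r [w' [c' [H' ->]]]. apply Key; auto. }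
  exists (fun xa => exists w c t, G (w,c) /\ fst xa = w +v io t *v z /\ snd xa = c + t * m).
  split; [split; [|split; [|split]] | split].
  - intros x a a' [w1 [c1 [t1 [H1 [E1 F1]]]]] [w2 [c2 [t2 [H2 [E2 F2]]]]]. simpl in *.
    subst a a'. rewrite E1 in E2.
    destruct (Req_dec t1 t2) as [->|Ht].
    + assert (w1 = w2). { apply (add_cancel_l _ X (io t2 *v z)). rewrite !(badd_comm _ X (io t2 *v z)). auto. }
      subst. rewrite (Gf _ _ _ H1 H2). reflexivity.
    + exfalso. apply Nz.
      assert (Eq : io (t1 - t2) *v z = w2 +v io (-1) *v w1).
      { assert (HH := f_equal (fun v => v +v (io (-1) *v w1 +v io (-t2) *v z)) E2). simpl in HH.
        rewrite (add_swap _ _ w1 (io t1 *v z)), (add_swap _ _ w2 (io t2 *v z)) in HH. rewrite R7, R2, R2 in HH.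
        replace (t2 + - t2) with 0 in HH by ring. rewrite R4, badd_0, add0l in HH.
        replace (t1 + - t2) with (t1 - t2) in HH by ring. exact HH. }
      exists (/ (t1 - t2) * (c2 + -1 * c1)).
      assert (z = io (/ (t1 - t2)) *v (w2 +v io (-1) *v w1)).
      { rewrite <- Eq, R3. replace (/ (t1 - t2) * (t1 - t2)) with 1 by (field; lra). rewrite R1; auto. }
      rewrite H at 1. apply Gs. apply Ga; auto.
  - intros x a y c [w1 [c1 [t1 [H1 [E1 F1]]]]] [w2 [c2 [t2 [H2 [E2 F2]]]]]. simpl in *.
    exists (w1 +v w2), (c1 + c2), (t1 + t2). split; [apply Ga; auto|]. simpl. split.
    + rewrite E1, E2, add_swap, R2. reflexivity.
    + subst; ring.
  - intros r x a [w1 [c1 [t1 [H1 [E1 F1]]]]]. simpl in *.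
    exists (io r *v w1), (r * c1), (r * t1). split; [apply Gs; auto|]. simpl. split.
    + rewrite E1, bscal_addV, R3. reflexivity.
    + subst; ring.
  - intros x a [w [c [t [H [E1 F1]]]]]. simpl in *. subst x a.
    destruct (Rtotal_order t 0) as [Hn|[H0|Hp]].
    + set (s := - t). assert (Hs : 0 < s) by (unfold s; lra).
      pose proof (Lo _ _ (Gs (/ s) _ _ H)).
      assert (Eq : io s *v (io (/ s) *v w +v io (-1) *v z) = w +v io t *v z).
      { rewrite bscal_addV, !R3. replace (s * / s) with 1 by (field; lra). rewrite R1. replace (s * -1) with t by (unfold s; ring). reflexivity. }
      assert (pp (w +v io t *v z) = s * pp (io (/ s) *v w +v io (-1) *v z)).
      { rewrite <- Eq, pp_scal, Rabs_right by lra. reflexivity. }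
      rewrite H1. replace c with (s * (/ s * c)) by (field; lra).
      replace (s * (/ s * c) + t * m) with (s * (/ s * c - m)) by (unfold s; ring).
      apply Rmult_le_compat_l; lra.
    + subst t. rewrite R4, badd_0. replace (c + 0 * m) with c by ring. apply Gd; auto.
    + pose proof (Hi _ _ (Gs (/ t) _ _ H)).
      assert (Eq : io t *v (io (/ t) *v w +v z) = w +v io t *v z).
      { rewrite bscal_addV, !R3. replace (t * / t) with 1 by (field; lra). rewrite R1. reflexivity. }
      assert (pp (w +v io t *v z) = t * pp (io (/ t) *v w +v z)).
      { rewrite <- Eq, pp_scal, Rabs_right by lra. reflexivity. }
      rewrite H1. replace c with (t * (/ t * c)) at 1 by (field; lra).
      replace (t * (/ t * c) + t * m) with (t * (/ t * c + m)) by ring.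
      apply Rmult_le_compat_l; lra.
  - intros [x a] H. exists x, a, 0. simpl. split; auto. rewrite R4, badd_0. split; auto. ring.
  - exists (0 + 1 * m). exists 0v, 0, 1. simpl. split; auto. rewrite R1, add0l. auto.
Qed.
End HB.
Section HB2.
Variable b : bool.
Notation K := (Kof b).
Variable X : Banach K.
Notation "x +v y" := (badd X x y) (at level 50, left associativity).
Notation "a *v x" := (bscal X a x) (at level 40).
Notation "0v" := (bzero X).
Notation io := (iota b).

Theorem HB (k : R) (kpos : 0 < k) (G0 : X * R -> Prop) : good b X k G0 -> G0 (0v, 0) ->
  exists F : X -> R, (forall x y, F (x +v y) = F x + F y) /\ (forall r x, F (io r *v x) = r * F x) /\
    (forall x, F x <= k * bnorm X x) /\ (forall x a, G0 (x,a) -> F x = a).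
Proof. intros Hg H0.
  destruct (zorn (X * R) (fun G => good b X k G /\ incl _ G0 G) G0) as [m [[Hm Hi] Mx]].
  - split; auto. intros u h; auto.
  - intros C HC Ch [s0' Cs0]. split.
    + split; [|split; [|split]].
      * intros x a a' [s [Cs Hs]] [t [Ct Ht]]. destruct (Ch s t Cs Ct) as [E|E].
        -- apply (proj1 (proj1 (HC t Ct)) x); auto.
        -- apply (proj1 (proj1 (HC s Cs)) x); auto.
      * intros x a y c [s [Cs Hs]] [t [Ct Ht]]. destruct (Ch s t Cs Ct) as [E|E].
        -- exists t; split; auto. apply (proj1 (proj2 (proj1 (HC t Ct)))); auto.
        -- exists s; split; auto. apply (proj1 (proj2 (proj1 (HC s Cs)))); auto.
      * intros r x a [s [Cs Hs]]. exists s; split; auto. apply (proj1 (proj2 (proj2 (proj1 (HC s Cs))))); auto.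
      * intros x a [s [Cs Hs]]. apply (proj2 (proj2 (proj2 (proj1 (HC s Cs))))) with (x := x); auto.
    + intros u h. exists s0'. split; auto. apply (proj2 (HC s0' Cs0)); auto.
  - assert (Tot : forall z, exists a, m (z, a)).
    { intro z. apply NNPP. intro N. destruct (extend b X k kpos m z Hm (Hi _ H0) N) as [G' [Hg' [Hi' [a Ha]]]].
      apply N. exists a. apply (Mx G'); auto. split; auto. intros u h; auto. }
    set (F := fun z => proj1_sig (constructive_indefinite_description _ (Tot z))).
    assert (HF : forall z, m (z, F z)). { intro z. unfold F. destruct (constructive_indefinite_description _ (Tot z)); auto. }
    destruct Hm as [Gf [Ga [Gs Gd]]].
    exists F. split; [|split; [|split]].
    + intros x y. apply (Gf (x +v y)); auto.
    + intros r x. apply (Gf (io r *v x)); auto.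
    + intros x. apply Gd; auto.
    + intros x a H. apply (Gf x); auto.
Qed.
End HB2.
Section SepR.
Variable b : bool.
Notation K := (Kof b).
Variable X : Banach K.
Add Field KF7 : (Kfield b).
Notation "x +v y" := (badd X x y) (at level 50, left associativity).
Notation "a *v x" := (bscal X a x) (at level 40).
Notation "0v" := (bzero X).
Notation io := (iota b).

Lemma S2 (a c : K) (x : X) : a *v x +v c *v x = sadd K a c *v x.
Proof. rewrite bscal_addK. reflexivity. Qed.
Lemma Sneg (x : X) : x +v sopp K (s1 K) *v x = 0v.
Proof. rewrite <- opp_scal. apply badd_opp. Qed.

Lemma Re0 : Re b (s0 K) = 0.
Proof. destruct b; reflexivity. Qed.
Lemma Re1 : Re b (s1 K) = 1.
Proof. destruct b; reflexivity. Qed.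

Lemma Sep_real (V : X -> Prop) (y : X) (d : R) : d > 0 -> V 0v ->
  (forall q q', V q -> V q' -> V (q +v q')) -> (forall a q, V q -> V (a *v q)) ->
  (forall q, V q -> d <= bnorm X (bsub y q)) ->
  exists F : X -> R, (forall x y, F (x +v y) = F x + F y) /\ (forall r x, F (io r *v x) = r * F x) /\
    (forall x, F x <= / d * bnorm X x) /\ (forall q, V q -> F q = 0) /\ F y = 1 /\ (forall l, F (l *v y) = Re b l).
Proof. intros Hd V0 Va Vs Vd.
  set (G0 := fun wa : X * R => exists q l, V q /\ fst wa = q +v l *v y /\ snd wa = Re b l).
  assert (Hg : good b X (/ d) G0).
  { split; [|split; [|split]].
    - intros x a a' [q [l [Hq [E1 F1]]]] [q' [l' [Hq' [E2 F2]]]]. simpl in *. subst.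
      destruct (classic (l = l')) as [->|Hl]; auto. exfalso.
      assert (Eq : sadd K l (sopp K l') *v y = q' +v sopp K (s1 K) *v q).
      { assert (HH := f_equal (fun v => v +v (sopp K (s1 K) *v q +v sopp K l' *v y)) E2). simpl in HH.
        rewrite (add_swap _ _ q), (add_swap _ _ q') in HH. rewrite Sneg, S2, S2 in HH.
        replace (sadd K l' (sopp K l')) with (s0 K) in HH by ring. rewrite scal0, badd_0, add0l in HH. auto. }
      assert (Hne : sadd K l (sopp K l') <> s0 K).
      { intro E. apply Hl. replace l with (sadd K (sadd K l (sopp K l')) l') by ring. rewrite E. ring. }
      assert (Vy : V y).
      { replace y with (Kinv b (sadd K l (sopp K l')) *v (q' +v sopp K (s1 K) *v q)).
        - apply Vs. apply Va; auto.
        - rewrite <- Eq, scal_scal. replace (smul K (Kinv b (sadd K l (sopp K l'))) (sadd K l (sopp K l'))) with (s1 K) by (field; auto). apply bscal_1. }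
      pose proof (Vd y Vy). rewrite eq_sub0, norm0 in H. lra.
    - intros x a x' a' [q [l [Hq [E1 F1]]]] [q' [l' [Hq' [E2 F2]]]]. simpl in *.
      exists (q +v q'), (sadd K l l'). simpl. split; [auto|split].
      + rewrite E1, E2, add_swap, S2. auto.
      + rewrite F1, F2, Re_add. auto.
    - intros r x a [q [l [Hq [E1 F1]]]]. simpl in *. exists (io r *v q), (smul K (io r) l). simpl. split; [auto|split].
      + rewrite E1, bscal_addV, scal_scal. auto.
      + rewrite F1, Re_iota_mul. auto.
    - intros x a [q [l [Hq [E1 F1]]]]. simpl in *. subst. unfold pp.
      destruct (classic (l = s0 K)) as [->|Hl].
      + rewrite Re0. pose proof (norm_nonneg _ X (q +v s0 K *v y)). pose proof (Rinv_0_lt_compat d Hd). nra.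
      + set (q'' := sopp K (Kinv b l) *v q).
        assert (Eq : l *v bsub y q'' = q +v l *v y).
        { unfold q'', bsub. rewrite opp_scal, scal_scal, bscal_addV, scal_scal, badd_comm.
          f_equal. replace (smul K l (smul K (sopp K (s1 K)) (sopp K (Kinv b l)))) with (s1 K) by (field; auto). apply bscal_1. }
        pose proof (Vd q'' (Vs _ _ Hq)). rewrite <- Eq, bnorm_scal.
        pose proof (Re_le b l). pose proof (sabs_nonneg b l). pose proof (Rinv_0_lt_compat d Hd).
        apply Rle_trans with (sabs K l); auto.
        replace (sabs K l) with (/ d * (sabs K l * d)) at 1 by (field; lra).
        apply Rmult_le_compat_l; [lra|]. apply Rmult_le_compat_l; auto. }
  assert (H0 : G0 (0v, 0)). { exists 0v, (s0 K). simpl. rewrite scal0, badd_0, Re0. auto. }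
  destruct (HB b X (/ d) (Rinv_0_lt_compat d Hd) G0 Hg H0) as [F [Fa [Fs [Fd Fe]]]].
  exists F. split; [|split; [|split; [|split; [|split]]]]; auto.
  - intros q Hq. apply Fe. exists q, (s0 K). simpl. rewrite scal0, badd_0, Re0. auto.
  - apply Fe. exists 0v, (s1 K). simpl. rewrite bscal_1, add0l, Re1. auto.
  - intro l. apply Fe. exists 0v, l. simpl. rewrite add0l. auto.
Qed.
End SepR.
Definition ci : sK (Kof true) := (0,1).
Lemma Cdec (X : Banach (Kof true)) (c : CC) (x : X) :
  bscal X c x = badd X (bscal X (iota true (fst c)) x) (bscal X (iota true (snd c)) (bscal X ci x)).
Proof. rewrite scal_scal, S2. f_equal. destruct c as [u v]. unfold ci; simpl. unfold Cadd, Cmul; simpl. f_equal; ring. Qed.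

Lemma Sep (b : bool) (X : Banach (Kof b)) (V : X -> Prop) (y : X) (d : R) : d > 0 -> V (bzero X) ->
  (forall q q', V q -> V q' -> V (badd X q q')) -> (forall a q, V q -> V (bscal X a q)) ->
  (forall q, V q -> d <= bnorm X (bsub y q)) ->
  exists f, dual_fun f /\ (forall q, V q -> f q = s0 (Kof b)) /\ f y = s1 (Kof b).
Proof. intros Hd V0 Va Vs Vd.
  destruct (Sep_real b X V y d Hd V0 Va Vs Vd) as [F [Fa [Fs [Fd [FV [Fy Fl]]]]]].
  assert (Fneg : forall x, - F x <= / d * bnorm X x).
  { intro x. pose proof (Fd (bscal X (iota b (-1)) x)). rewrite Fs, <- R6, norm_opp in H. lra. }
  destruct b.
  - exists (fun x => (F x, - F (bscal X ci x)) : CC). split; [split; [|split]|split].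
    + intros x z. simpl. rewrite Fa, bscal_addV, Fa. unfold Cadd; simpl. f_equal; ring.
    + intros a x.
      assert (E1 : F (bscal X a x) = fst a * F x + snd a * F (bscal X ci x)).
      { rewrite (Cdec X a x), Fa, !Fs. reflexivity. }
      assert (E2 : F (bscal X ci (bscal X a x)) = - snd a * F x + fst a * F (bscal X ci x)).
      { rewrite scal_scal. rewrite (Cdec X _ x), Fa, !Fs. destruct a as [u v]. simpl. ring. }
      rewrite E1, E2. destruct a as [u v]. simpl. unfold Cmul; simpl. f_equal; ring.
    + exists (/ d). intro x. change (Cabs (F x, - F (bscal X ci x)) <= / d * bnorm X x). unfold Cabs. cbn [fst snd].
      set (u := F x). set (v := - F (bscal X ci x)).
      set (r := sqrt (u * u + v * v)).
      pose proof (Rle_0_sqr u); pose proof (Rle_0_sqr v); unfold Rsqr in *.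
      assert (Hr : 0 <= r) by apply sqrt_pos.
      destruct (Req_dec r 0) as [E|E].
      * rewrite E. pose proof (norm_nonneg _ X x). pose proof (Rinv_0_lt_compat d Hd). nra.
      * set (mu := (u / r, - v / r) : CC).
        assert (Fm : F (bscal X mu x) = r).
        { rewrite (Cdec X mu x), Fa, !Fs. unfold mu; cbn [fst snd]. fold u.
          replace (F (bscal X ci x)) with (- v) by (unfold v; ring).
          assert (HH : r * r = u * u + v * v) by (unfold r; apply sqrt_sqrt; nra).
          replace (u / r * u + - v / r * - v) with ((u * u + v * v) / r) by (field; auto).
          rewrite <- HH. field. auto. }
        assert (Am : Cabs mu = 1).
        { unfold Cabs, mu; simpl. assert (r * r = u * u + v * v) by (unfold r; apply sqrt_sqrt; nra).
          replace (u / r * (u / r) + - v / r * (- v / r)) with 1. apply sqrt_1.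
          replace (u / r * (u / r) + - v / r * (- v / r)) with ((u * u + v * v) / (r * r)) by (field; auto).
          rewrite <- H1. field. auto. }
        pose proof (Fd (bscal X mu x)). rewrite Fm, bnorm_scal in H1. simpl in H1. rewrite Am, Rmult_1_l in H1. exact H1.
    + intros q Hq. simpl. rewrite FV, FV; auto. f_equal; ring.
    + change ((F y, - F (bscal X ci y)) = ((1, 0) : CC)). rewrite Fy, Fl. unfold ci; simpl. f_equal; ring.
  - exists F. refine (conj (conj Fa (conj (fun a x => Fs a x) _)) (conj FV Fy)).
    exists (/ d). intro x. simpl. unfold Rabs. destruct (Rcase_abs (F x)).
      * apply Fneg. * apply Fd.
Qed.
Section Ops.
Variable b : bool.
Notation K := (Kof b).
Variable X : Banach K.
Add Field KF9 : (Kfield b).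
Notation "x +v y" := (badd X x y) (at level 50, left associativity).
Notation "a *v x" := (bscal X a x) (at level 40).
Notation "0v" := (bzero X).

Lemma lin_add (S : X -> X) : bounded_op S -> forall x y, S (x +v y) = S x +v S y.
Proof. intros [[H _] _]; auto. Qed.
Lemma lin_scal (S : X -> X) : bounded_op S -> forall a x, S (a *v x) = a *v S x.
Proof. intros [[_ H] _]; auto. Qed.
Lemma lin_zero (S : X -> X) : bounded_op S -> S 0v = 0v.
Proof. intro H. transitivity (S (s0 K *v 0v)). - f_equal; symmetry; apply scal0. - rewrite (lin_scal S H), scal0. reflexivity. Qed.
Lemma lin_opp (S : X -> X) : bounded_op S -> forall x, S (bopp X x) = bopp X (S x).
Proof. intros H x. rewrite !opp_scal, (lin_scal S H). reflexivity. Qed.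
Lemma lin_sub (S : X -> X) : bounded_op S -> forall x y, S (bsub x y) = bsub (S x) (S y).
Proof. intros H x y. unfold bsub. rewrite (lin_add S H), (lin_opp S H). reflexivity. Qed.

Lemma bound_pos (S : X -> X) : bounded_op S -> exists c, 0 <= c /\ forall x, bnorm X (S x) <= c * bnorm X x.
Proof. intros [_ [c Hc]]. exists (Rmax c 0). split; [apply Rmax_r|]. intro x.
  pose proof (Hc x). pose proof (norm_nonneg _ X x). pose proof (Rmax_l c 0).
  eapply Rle_trans; eauto. apply Rmult_le_compat_r; auto. Qed.

Lemma bounded_comp (S U : X -> X) : bounded_op S -> bounded_op U -> bounded_op (fun x => S (U x)).
Proof. intros HS HU. split; [split|].
  - intros x y. rewrite (lin_add U HU), (lin_add S HS). auto.
  - intros a x. rewrite (lin_scal U HU), (lin_scal S HS). auto.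
  - destruct (bound_pos S HS) as [c [c0 Hc]]. destruct (bound_pos U HU) as [c' [c0' Hc']].
    exists (c * c'). intro x. eapply Rle_trans; [apply Hc|]. rewrite Rmult_assoc.
    apply Rmult_le_compat_l; auto. Qed.

Lemma bounded_sub (S U : X -> X) : bounded_op S -> bounded_op U -> bounded_op (fun x => bsub (S x) (U x)).
Proof. intros HS HU. split; [split|].
  - intros x y. rewrite (lin_add U HU), (lin_add S HS). unfold bsub.
    rewrite opp_scal, opp_scal, opp_scal, bscal_addV. apply add_swap.
  - intros a x. rewrite (lin_scal U HU), (lin_scal S HS). unfold bsub.
    rewrite !opp_scal, bscal_addV, !scal_scal. f_equal. f_equal. ring.
  - destruct (bound_pos S HS) as [c [c0 Hc]]. destruct (bound_pos U HU) as [c' [c0' Hc']].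
    exists (c + c'). intro x. unfold bsub. eapply Rle_trans; [apply bnorm_tri|]. rewrite norm_opp.
    specialize (Hc x); specialize (Hc' x). lra. Qed.

Lemma bsub_add (x y : X) : bsub (x +v y) x = y.
Proof. unfold bsub. rewrite (badd_comm _ X x y), <- badd_assoc, badd_opp, badd_0. auto. Qed.
Lemma add_bsub (x y : X) : y +v bsub x y = x.
Proof. unfold bsub. rewrite (badd_comm _ X x), badd_assoc, badd_opp, add0l. auto. Qed.
Lemma bsub0 (x : X) : bsub x 0v = x.
Proof. unfold bsub. rewrite opp_scal, scalz, badd_0. auto. Qed.

Lemma iter_add (S : X -> X) : bounded_op S -> forall n x y, Nat.iter n S (x +v y) = Nat.iter n S x +v Nat.iter n S y.
Proof. intros H n. induction n; intros; simpl; auto. rewrite IHn, (lin_add S H). auto. Qed.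
Lemma iter_scal (S : X -> X) : bounded_op S -> forall n a x, Nat.iter n S (a *v x) = a *v Nat.iter n S x.
Proof. intros H n. induction n; intros; simpl; auto. rewrite IHn, (lin_scal S H). auto. Qed.
Lemma iter_comm (S U : X -> X) : (forall x, S (U x) = U (S x)) -> forall n x, Nat.iter n S (U x) = U (Nat.iter n S x).
Proof. intros H n. induction n; intros; simpl; auto. rewrite IHn, H. auto. Qed.

Lemma dual_zero (f : X -> K) : dual_fun f -> f 0v = s0 K.
Proof. intros [_ [H _]]. transitivity (f (s0 K *v 0v)). - f_equal; symmetry; apply scal0. - rewrite H. ring. Qed.
Lemma dual_add (f : X -> K) : dual_fun f -> forall x y, f (x +v y) = sadd K (f x) (f y).
Proof. intros [H _]; auto. Qed.
Lemma dual_scal (f : X -> K) : dual_fun f -> forall a x, f (a *v x) = smul K a (f x).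
Proof. intros [_ [H _]]; auto. Qed.

Lemma dual_comp (f : X -> K) (S : X -> X) : dual_fun f -> bounded_op S -> dual_fun (fun x => f (S x)).
Proof. intros Hf HS. split; [|split].
  - intros x y. rewrite (lin_add S HS), (dual_add f Hf). auto.
  - intros a x. rewrite (lin_scal S HS), (dual_scal f Hf). auto.
  - destruct Hf as [_ [_ [c Hc]]]. destruct (bound_pos S HS) as [c' [c0' Hc']].
    exists (Rmax c 0 * c'). intro x. eapply Rle_trans; [apply Hc|].
    apply Rle_trans with (Rmax c 0 * bnorm X (S x)).
    + apply Rmult_le_compat_r; [apply norm_nonneg|apply Rmax_l].
    + rewrite Rmult_assoc. apply Rmult_le_compat_l; [apply Rmax_r|auto]. Qed.

Lemma dual_comb (f g : X -> K) (l : K) : dual_fun f -> dual_fun g -> dual_fun (fun x => sadd K (f x) (smul K l (g x))).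
Proof. intros Hf Hg. split; [|split].
  - intros x y. rewrite (dual_add f Hf), (dual_add g Hg). ring.
  - intros a x. rewrite (dual_scal f Hf), (dual_scal g Hg). ring.
  - destruct Hf as [_ [_ [c Hc]]]. destruct Hg as [_ [_ [c' Hc']]].
    exists (Rmax c 0 + sabs K l * Rmax c' 0). intro x.
    eapply Rle_trans; [apply sabs_tri|]. rewrite sabs_mul.
    pose proof (norm_nonneg _ X x). pose proof (sabs_nonneg b l).
    assert (sabs K (f x) <= Rmax c 0 * bnorm X x).
    { eapply Rle_trans; [apply Hc|]. apply Rmult_le_compat_r; auto. apply Rmax_l. }
    assert (sabs K (g x) <= Rmax c' 0 * bnorm X x).
    { eapply Rle_trans; [apply Hc'|]. apply Rmult_le_compat_r; auto. apply Rmax_l. }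
    assert (sabs K l * sabs K (g x) <= sabs K l * (Rmax c' 0 * bnorm X x)) by (apply Rmult_le_compat_l; auto).
    nra. Qed.

Lemma wd2 (A : X -> Prop) (g1 g2 : X -> K) (eps : R) : weakly_dense A -> dual_fun g1 -> dual_fun g2 -> eps > 0 ->
  forall P, exists a, A a /\ sabs K (sadd K (g1 a) (sopp K (g1 P))) < eps /\ sabs K (sadd K (g2 a) (sopp K (g2 P))) < eps.
Proof. intros HA H1 H2 He P. destruct (HA P (g1 :: g2 :: nil) eps) as [a [Ha HF]]; auto.
  inversion HF; subst. inversion H4; subst. exists a; auto. Qed.

Lemma s01 : s0 K <> s1 K.
Proof. destruct b; simpl; [intro H; inversion H; lra| lra]. Qed.

Lemma sabs_rev (a c : K) : sabs K a <= sabs K (sadd K a (sopp K c)) + sabs K c.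
Proof. replace a with (sadd K (sadd K a (sopp K c)) c) at 1 by ring. apply sabs_tri. Qed.
End Ops.
Section Cyc.
Variable b : bool.
Notation K := (Kof b).
Variable X : Banach K.
Add Field KF10 : (Kfield b).
Notation "x +v y" := (badd X x y) (at level 50, left associativity).
Notation "a *v x" := (bscal X a x) (at level 40).
Notation "0v" := (bzero X).
Variable T : X -> X.
Variable x : X.
Notation oc := (orbit_comb T x).

Lemma oc_add c c' n : oc c n +v oc c' n = oc (fun j => sadd K (c j) (c' j)) n.
Proof. induction n; simpl. - apply badd_0. - rewrite add_swap, IHn, S2. auto. Qed.
Lemma oc_scal a c n : a *v oc c n = oc (fun j => smul K a (c j)) n.
Proof. induction n; simpl. - apply scalz. - rewrite bscal_addV, IHn, scal_scal. auto. Qed.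
Lemma oc_ext c c' n : (forall j, (j < n)%nat -> c j = c' j) -> oc c n = oc c' n.
Proof. induction n; intro H; simpl; auto. rewrite IHn, H; auto. Qed.
Lemma oc_zero c n : (forall j, (j < n)%nat -> c j = s0 K) -> oc c n = 0v.
Proof. induction n; intro H; simpl; auto. rewrite IHn, H, scal0; auto. apply badd_0. Qed.
Lemma oc_pad c n k : (forall j, (j >= n)%nat -> c j = s0 K) -> oc c (n + k) = oc c n.
Proof. intro H. induction k. - rewrite Nat.add_0_r; auto.
  - rewrite Nat.add_succ_r. simpl. rewrite IHk, H, scal0, badd_0; auto. lia. Qed.

Definition Vo (q : X) := exists n c, q = oc c n.

Lemma Vo_add q q' : Vo q -> Vo q' -> Vo (q +v q').
Proof. intros [n [c ->]] [n' [c' ->]].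
  set (c1 := fun j => if (j <? n)%nat then c j else s0 K).
  set (c1' := fun j => if (j <? n')%nat then c' j else s0 K).
  assert (E1 : oc c n = oc c1 (n + n')).
  { rewrite oc_pad. - apply oc_ext. intros j Hj. unfold c1. apply Nat.ltb_lt in Hj. rewrite Hj; auto.
    - intros j Hj. unfold c1. destruct (j <? n)%nat eqn:E; auto. apply Nat.ltb_lt in E. lia. }
  assert (E2 : oc c' n' = oc c1' (n + n')).
  { rewrite Nat.add_comm. rewrite oc_pad. - apply oc_ext. intros j Hj. unfold c1'. apply Nat.ltb_lt in Hj. rewrite Hj; auto.
    - intros j Hj. unfold c1'. destruct (j <? n')%nat eqn:E; auto. apply Nat.ltb_lt in E. lia. }
  exists (n + n')%nat. exists (fun j => sadd K (c1 j) (c1' j)). rewrite E1, E2, oc_add. auto. Qed.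

Lemma Vo_scal a q : Vo q -> Vo (a *v q).
Proof. intros [n [c ->]]. exists n, (fun j => smul K a (c j)). apply oc_scal. Qed.

Lemma Vo_orb z n : Vo (z *v Nat.iter n T x).
Proof. exists (S n), (fun j => if (j =? n)%nat then z else s0 K). simpl.
  rewrite oc_zero, add0l, Nat.eqb_refl; auto. intros j Hj. destruct (j =? n)%nat eqn:E; auto.
  apply Nat.eqb_eq in E. lia. Qed.

Lemma wsc_cyclic : weakly_dense (fun y => exists (z : K) (n : nat), y = bscal X z (Nat.iter n T x)) -> cyclic_vector T x.
Proof. intros Hw y eps Heps. apply NNPP. intro N.
  assert (Hd : forall q, Vo q -> eps <= bnorm X (bsub y q)).
  { intros q [n [c ->]]. apply Rnot_lt_le. intro L. apply N. exists n, c. auto. }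
  destruct (Sep b X Vo y eps Heps (ex_intro _ O (ex_intro _ (fun _ => s0 K) eq_refl)) Vo_add Vo_scal Hd) as [f [Hf [FV Fy]]].
  destruct (wd2 b X _ f f (/2) Hw Hf Hf ltac:(lra) y) as [a [[z [n ->]] [H1 _]]].
  rewrite FV, Fy in H1 by apply Vo_orb.
  replace (sadd K (s0 K) (sopp K (s1 K))) with (sopp K (s1 K)) in H1 by ring.
  rewrite sabs_opp, sabs_1 in H1. lra. Qed.
End Cyc.
Section Aux.
Variable b : bool.
Notation K := (Kof b).
Add Field KF11 : (Kfield b).
Lemma cancel_r (a c u : K) : u <> s0 K -> smul K a u = smul K c u -> a = c.
Proof. intros Hu H. transitivity (smul K (smul K a u) (Kinv b u)). - field; auto.
  - rewrite H. field; auto. Qed.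
Lemma sabs_sub_sym (a c : K) : sabs K (sadd K a (sopp K c)) = sabs K (sadd K c (sopp K a)).
Proof. rewrite <- sabs_opp. f_equal. ring. Qed.
Lemma two_nz : sadd K (s1 K) (s1 K) <> s0 K.
Proof. destruct b; simpl; [intro H; inversion H; lra | lra]. Qed.
Lemma s01' : s0 K <> s1 K.
Proof. destruct b; simpl; [intro H; inversion H; lra| lra]. Qed.
Lemma m1_nz : sopp K (s1 K) <> s0 K.
Proof. intro H. apply s01'. apply (f_equal (sopp K)) in H.
  transitivity (sopp K (s0 K)); [ring|]. rewrite <- H. ring. Qed.
End Aux.
Lemma Sep0 (b : bool) (X : Banach (Kof b)) (w : X) : w <> bzero X -> exists f, dual_fun f /\ f w = s1 (Kof b).
Proof. intro Hw. destruct (Sep b X (fun q => q = bzero X) w (bnorm X w)) as [f [Hf [_ Fw]]].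
  - apply norm_pos; auto.
  - auto.
  - intros q q' -> ->. apply badd_0.
  - intros a q ->. apply scalz.
  - intros q ->. rewrite bsub0. lra.
  - exists f; auto. Qed.

Section Main.
Variable b : bool.
Notation K := (Kof b).
Variable X : Banach K.
Add Field KF12 : (Kfield b).
Notation "x +v y" := (badd X x y) (at level 50, left associativity).
Notation "a *v x" := (bscal X a x) (at level 40).
Notation "0v" := (bzero X).
Notation io := (iota b).
Variable T M B C : X -> X.
Hypothesis HT : bounded_op T.
Hypothesis HM : bounded_op M.
Hypothesis HTTM : is_zero_op (commutator T (commutator T M)).
Hypothesis HB : in_commutant T B.
Hypothesis HC : in_commutant T C.
Variable x : X.
Hypothesis HCB : C (M x) = B x.
Notation A := (commutator T M).

Lemma HAb : bounded_op A.
Proof. apply bounded_sub; apply bounded_comp; auto. Qed.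
Lemma HAc v : T (A v) = A (T v).
Proof. apply sub_eq0. apply HTTM. Qed.
Lemma HBc v : T (B v) = B (T v).
Proof. apply sub_eq0. apply (proj2 HB). Qed.
Lemma HCc v : T (C v) = C (T v).
Proof. apply sub_eq0. apply (proj2 HC). Qed.
Lemma HTM v : T (M v) = M (T v) +v A v.
Proof. symmetry. apply add_bsub. Qed.

Lemma L2 n v : Nat.iter (S n) T (M v) = M (Nat.iter (S n) T v) +v io (INR (S n)) *v Nat.iter n T (A v).
Proof. induction n.
  - simpl. rewrite R1. apply HTM.
  - change (Nat.iter (S (S n)) T (M v)) with (T (Nat.iter (S n) T (M v))). rewrite IHn.
    rewrite (lin_add _ _ T HT), (lin_scal _ _ T HT), HTM.
    rewrite <- (iter_comm _ _ T A HAc (S n) v).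
    change (T (Nat.iter n T (A v))) with (Nat.iter (S n) T (A v)).
    change (T (Nat.iter (S n) T v)) with (Nat.iter (S (S n)) T v).
    rewrite <- badd_assoc. f_equal. rewrite <- (R1 _ _ (Nat.iter (S n) T (A v))) at 1.
    rewrite R2. f_equal. f_equal. rewrite (S_INR (S n)). ring. Qed.

Definition Dop v := C (A v).
Definition Rop v := T (bsub (B v) (C (M v))).

Lemma HDb : bounded_op Dop.
Proof. unfold Dop. apply bounded_comp; [apply (proj1 HC)|apply HAb]. Qed.
Lemma HRb : bounded_op Rop.
Proof. unfold Rop. apply bounded_comp; auto. apply bounded_sub; [apply (proj1 HB)|]. apply bounded_comp; auto. apply (proj1 HC). Qed.

Lemma ID n : Rop (Nat.iter n T x) = io (INR n) *v Dop (Nat.iter n T x).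
Proof. unfold Rop, Dop. destruct n as [|k].
  - simpl. rewrite HCB, eq_sub0, (lin_zero _ _ T HT), R4. auto.
  - rewrite <- (iter_comm _ _ T B HBc (S k) x).
    assert (E : Nat.iter (S k) T (B x) = C (M (Nat.iter (S k) T x)) +v io (INR (S k)) *v C (Nat.iter k T (A x))).
    { rewrite <- HCB, (iter_comm _ _ T C HCc (S k) (M x)), L2, (lin_add _ _ C (proj1 HC)), (lin_scal _ _ C (proj1 HC)). auto. }
    rewrite E, bsub_add, (lin_scal _ _ T HT), HCc. f_equal. f_equal.
    change (T (Nat.iter k T (A x))) with (Nat.iter (S k) T (A x)). apply iter_comm. apply HAc. Qed.

Lemma ID2 z n : Rop (z *v Nat.iter n T x) = io (INR n) *v Dop (z *v Nat.iter n T x).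
Proof. rewrite (lin_scal _ _ Rop HRb), (lin_scal _ _ Dop HDb), ID, !scal_scal. f_equal. ring. Qed.
End Main.
Section Final.
Variable b : bool.
Variable X : Banach (Kof b).
Variable T : X -> X.
Add Field KF13 : (Kfield b).
Notation K := (Kof b).
Lemma final_main :
  in_class_Y X ->
  bounded_op T ->
  (exists M : X -> X,
      bounded_op M /\
      is_zero_op (commutator T (commutator T M)) /\
      (forall u v : X, cyclic_vector T u ->
         exists B C : X -> X,
           in_commutant T B /\ in_commutant T C /\
           ~ is_zero_op (fun x => C (commutator T M x)) /\
           C v = B u)) ->
  ~ weakly_supercyclic T.
Proof.
  intros _ HT [M [HM [HTTM Hh]]] [x Hx].
  pose proof (wsc_cyclic b X T x Hx) as Hcyc.
  destruct (Hh x (M x) Hcyc) as [B [C [HB [HC [HD HCB]]]]].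
  set (D := Dop b X T M C). set (R := Rop b X T M B C).
  assert (HDb : bounded_op D) by (apply HDb; auto).
  assert (HRb : bounded_op R) by (apply HRb; auto).
  assert (Hid : forall z n, R (bscal X z (Nat.iter n T x)) = bscal X (iota b (INR n)) (D (bscal X z (Nat.iter n T x)))).
  { intros. apply ID2; auto. }
  destruct (not_all_ex_not _ _ HD) as [p Hp]. fold (Dop b X T M C p) in Hp. fold D in Hp.
  destruct (Sep0 b X (D p) Hp) as [f [Hf Fp]].
  set (g1 := fun v => f (D v)). set (g2 := fun v => f (R v)).
  assert (Hg1 : dual_fun g1) by (unfold g1; apply dual_comp; auto).
  assert (Hg2 : dual_fun g2) by (unfold g2; apply dual_comp; auto).
  assert (Horb : forall z n, g2 (bscal X z (Nat.iter n T x)) = smul _ (iota b (INR n)) (g1 (bscal X z (Nat.iter n T x)))).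
  { intros. unfold g1, g2. rewrite Hid, (dual_scal _ _ f Hf). auto. }
  assert (g1p : g1 p = s1 _) by exact Fp.
  set (O := fun y : X => exists (z : K) (n : nat), y = bscal X z (Nat.iter n T x)).
  set (bb := g2 p).
  destruct (classic (exists q, g2 q <> smul K bb (g1 q))) as [[q Hq]|NA].
  -
    set (c := g1 q). set (dd := g2 q).
    set (det := sadd K dd (sopp K (smul K bb c))).
    assert (Hdet : det <> s0 K).
    { intro E. apply Hq. fold dd c. replace dd with (sadd K det (smul K bb c)) by (unfold det; ring). rewrite E. ring. }
    set (half := iota b (/ 2)).
    set (t := smul K (sadd K half (sopp K bb)) (Kinv b det)).
    set (s := sadd K (s1 K) (sopp K (smul K t c))).
    set (P := badd X (bscal X s p) (bscal X t q)).
    assert (G1P : g1 P = s1 K).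
    { unfold P. rewrite (dual_add _ _ _ Hg1), !(dual_scal _ _ _ Hg1), g1p. fold c. unfold s. ring. }
    assert (G2P : g2 P = half).
    { unfold P. rewrite (dual_add _ _ _ Hg2), !(dual_scal _ _ _ Hg2). fold bb dd. unfold s, t.
      replace dd with (sadd K det (smul K bb c)) by (unfold det; ring). field. auto. }
    destruct (wd2 b X O g1 g2 (/ 4) Hx Hg1 Hg2 ltac:(lra) P) as [a [[z [n ->]] [H1 H2]]].
    rewrite Horb in H2. rewrite G1P in H1. rewrite G2P in H2.
    set (u1 := g1 (bscal X z (Nat.iter n T x))) in *.
    assert (Hhalf : sabs K half = / 2) by (unfold half; rewrite sabs_iota; apply Rabs_right; lra).
    destruct n as [|k].
    + simpl in H2. rewrite iota_0 in H2.
      replace (sadd K (smul K (s0 K) u1) (sopp K half)) with (sopp K half) in H2 by ring.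
      rewrite sabs_opp, Hhalf in H2. lra.
    + pose proof (sabs_rev b (s1 K) u1) as R1. rewrite sabs_1, sabs_sub_sym in R1.
      pose proof (sabs_rev b (smul K (iota b (INR (S k))) u1) half) as R2. rewrite Hhalf in R2.
      rewrite sabs_mul, sabs_iota in R2. rewrite Rabs_right in R2 by (apply Rle_ge, pos_INR).
      pose proof (S_INR k). pose proof (pos_INR k). pose proof (sabs_nonneg b u1).
      assert (INR (S k) * sabs K u1 >= sabs K u1) by nra. lra.
  -
    assert (HBq : forall q, g2 q = smul K bb (g1 q)).
    { intro q. apply NNPP. intro N. apply NA. exists q; auto. }
    destruct (wd2 b X O g1 g1 1 Hx Hg1 Hg1 ltac:(lra) p) as [a0 [[z0 [n0 ->]] [H1 _]]].
    assert (Ha0 : g1 (bscal X z0 (Nat.iter n0 T x)) <> s0 K).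
    { intro E. rewrite E, g1p in H1. replace (sadd K (s0 K) (sopp K (s1 K))) with (sopp K (s1 K)) in H1 by ring.
      rewrite sabs_opp, sabs_1 in H1. lra. }
    assert (Hn : forall z n, g1 (bscal X z (Nat.iter n T x)) <> s0 K -> n = n0).
    { assert (Ek : forall z n, g1 (bscal X z (Nat.iter n T x)) <> s0 K -> iota b (INR n) = bb).
      { intros z n Hz. apply (cancel_r b _ _ _ Hz). rewrite <- Horb. apply HBq. }
      intros z n Hz. apply INR_eq. apply (iota_inj b). rewrite (Ek z n Hz), (Ek z0 n0 Ha0). auto. }
    set (e := Nat.iter n0 T x).
    assert (He : e <> bzero X).
    { intro E. apply Ha0. fold e. rewrite E, scalz. apply dual_zero; auto. }
    destruct (classic (forall v, exists z, v = bscal X z e)) as [Hall|Hnot].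
    +
      apply Hp. unfold D, Dop.
      destruct (Hall (T e)) as [al Hal]. destruct (Hall (M e)) as [mu Hmu].
      assert (Ae : commutator T M e = bzero X).
      { unfold commutator. rewrite Hmu, (lin_scal _ _ T HT), Hal, (lin_scal _ _ M HM), Hmu, !scal_scal.
        replace (smul K mu al) with (smul K al mu) by ring. apply eq_sub0. }
      destruct (Hall p) as [zp ->]. rewrite (lin_scal _ _ _ (HAb b X T M HT HM)), Ae, scalz.
      apply (lin_zero _ _ C (proj1 HC)).
    + destruct (not_all_ex_not _ _ Hnot) as [v Hv].
      assert (Hv2 : forall z, v <> bscal X z e). { intros z E. apply Hv. exists z; auto. }
      destruct (Sep0 b X e He) as [f0 [Hf0 F0e]].
      set (v' := badd X v (bscal X (sopp K (f0 v)) e)).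
      assert (Hv' : v' <> bzero X).
      { intro E. apply (Hv2 (f0 v)).
        assert (HH := f_equal (fun w => badd X w (bscal X (f0 v) e)) E). simpl in HH.
        unfold v' in HH. rewrite <- badd_assoc, S2 in HH.
        replace (sadd K (sopp K (f0 v)) (f0 v)) with (s0 K) in HH by ring.
        rewrite scal0, badd_0, add0l in HH. auto. }
      destruct (Sep0 b X v' Hv') as [h0 [Hh0 H0v]].
      set (h := fun y => sadd K (h0 y) (smul K (sopp K (h0 e)) (f0 y))).
      assert (Hhd : dual_fun h) by (unfold h; apply dual_comb; auto).
      assert (he : h e = s0 K) by (unfold h; rewrite F0e; ring).
      assert (f0v' : f0 v' = s0 K).
      { unfold v'. rewrite (dual_add _ _ _ Hf0), (dual_scal _ _ _ Hf0), F0e. ring. }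
      assert (hv' : h v' = s1 K) by (unfold h; rewrite f0v', H0v; ring).
      assert (HP : exists P, g1 P <> s0 K /\ h P <> s0 K).
      { destruct (classic (h p = s0 K)) as [E1|E1].
        - destruct (classic (g1 (badd X p v') = s0 K)) as [E2|E2].
          + exists (badd X p (bscal X (sadd K (s1 K) (s1 K)) v')).
            rewrite (dual_add _ _ _ Hg1), (dual_add _ _ _ Hhd), (dual_scal _ _ _ Hg1), (dual_scal _ _ _ Hhd), E1, hv'.
            rewrite (dual_add _ _ _ Hg1), g1p in E2. rewrite g1p. split.
            * replace (sadd K (s1 K) (smul K (sadd K (s1 K) (s1 K)) (g1 v'))) with
                (sadd K (smul K (sadd K (s1 K) (s1 K)) (sadd K (s1 K) (g1 v'))) (sopp K (s1 K))) by ring.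
              rewrite E2. replace (sadd K (smul K (sadd K (s1 K) (s1 K)) (s0 K)) (sopp K (s1 K))) with (sopp K (s1 K)) by ring.
              apply m1_nz.
            * replace (sadd K (s0 K) (smul K (sadd K (s1 K) (s1 K)) (s1 K))) with (sadd K (s1 K) (s1 K)) by ring.
              apply two_nz.
          + exists (badd X p v'). split; auto. rewrite (dual_add _ _ _ Hhd), E1, hv'.
            replace (sadd K (s0 K) (s1 K)) with (s1 K) by ring. intro E. apply (s01' b). auto.
        - exists p. split; auto. rewrite g1p. intro E. apply (s01' b). auto. }
      destruct HP as [P [HP1 HP2]].
      pose proof (sabs_pos b _ HP1). pose proof (sabs_pos b _ HP2).
      destruct (wd2 b X O g1 h (Rmin (sabs K (g1 P)) (sabs K (h P))) Hx Hg1 Hhd ltac:(apply Rmin_pos; lra) P) as [a [[z [n ->]] [H3 H4]]].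
      pose proof (Rmin_l (sabs K (g1 P)) (sabs K (h P))). pose proof (Rmin_r (sabs K (g1 P)) (sabs K (h P))).
      assert (Hg : g1 (bscal X z (Nat.iter n T x)) <> s0 K).
      { intro E. rewrite E in H3. replace (sadd K (s0 K) (sopp K (g1 P))) with (sopp K (g1 P)) in H3 by ring.
        rewrite sabs_opp in H3. lra. }
      apply Hn in Hg. subst n. fold e in H4. rewrite (dual_scal _ _ _ Hhd), he in H4.
      replace (sadd K (smul K z (s0 K)) (sopp K (h P))) with (sopp K (h P)) in H4 by ring.
      rewrite sabs_opp in H4. lra.
Qed.
End Final.

Theorem corollary1p5 (b : bool) (X : Banach (Kof b)) (T : X -> X) :
  in_class_Y X ->
  bounded_op T ->
  (exists M : X -> X,
      bounded_op M /\
      is_zero_op (commutator T (commutator T M)) /\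
      (forall u v : X, cyclic_vector T u ->
         exists B C : X -> X,
           in_commutant T B /\ in_commutant T C /\
           ~ is_zero_op (fun x => C (commutator T M x)) /\
           C v = B u)) ->
  ~ weakly_supercyclic T.
Proof. exact (final_main b X T). Qed.
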